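(* Let $M>0$, $l,p\in\mathbb N$, and $0<\lambda<\min\{1,1/\widetilde M\}$ where $\widetilde M=\sum_{j=0}^pM^j$. Consider the SigSAS state map $F^{\rm SigSAS}_{\lambda,l,p}:T^{l+1}(\mathbb R^{p+1})\times\mathbb R\to T^{l+1}(\mathbb R^{p+1})$, $F^{\rm SigSAS}_{\lambda,l,p}(\mathbf x,z)=\lambda\pi_l(\mathbf x)\otimes\widetilde{\mathbf z}+\widehat{\mathbf z}^0$, with inputs $z\in[-M,M]$. Then: (1) for all $\mathbf x_1,\mathbf x_2$ and $z\in[-M,M]$, $\|F^{\rm SigSAS}_{\lambda,l,p}(\mathbf x_1,z)-F^{\rm SigSAS}_{\lambda,l,p}(\mathbf x_2,z)\|\le\lambda\widetilde M\|\mathbf x_1-\mathbf x_2\|$, with $\lambda\widetilde M<1$; (2) with $L:=\widetilde M/(1-\lambda\widetilde M)$, $F^{\rm SigSAS}_{\lambda,l,p}$ maps $\overline{B(\mathbf 0,L)}\times[-M,M]$ into $\overline{B(\mathbf 0,L)}$; (3) the state system $\mathbf x_t=F^{\rm SigSAS}_{\lambda,l,p}(\mathbf x_{t-1},z_t)$ with inputs in $K_M=[-M,M]^{\mathbb Z_-}$ has the echo state property and the fading memory property, and its (continuous, causal, time-invariant) filter $U^{\rm SigSAS}_{\lambda,l,p}:K_M\to K_L$ is given, for $\mathbf z\in K_M$, $t\in\mathbb Z_-$, by $$U^{\rm SigSAS}_{\lambda,l,p}(\mathbf z)_t=\frac{\lambda^{l+1}}{1-\lambda}\widehat{\mathbf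 z}_t+\sum_{j=0}^{l}\lambda^j\Phi_j(\mathbf z)_t,$$ where $\Phi_j(\mathbf z)_t:=\Psi^{(j)}$ is defined recursively by $\Psi^{(0)}=\widehat{\mathbf z}^0_{t-j}$ and $\Psi^{(r)}=\pi_l(\Psi^{(r-1)})\otimes\widetilde{\mathbf z}_{t-j+r}$ for $r=1,\dots,j$ (so $\Phi_0(\mathbf z)_t=\widehat{\mathbf z}^0_t$, $\Phi_1(\mathbf z)_t=\pi_l(\widehat{\mathbf z}^0_{t-1})\otimes\widetilde{\mathbf z}_t$, etc.).
   Context: $\mathbb Z_-=\{\dots,-1,0\}$. $T^{l+1}(\mathbb R^{p+1})=(\mathbb R^{p+1})^{\otimes(l+1)}$ with canonical basis $\mathbf e_{i_1}\otimes\cdots\otimes\mathbf e_{i_{l+1}}$, $i_r\in\{1,\dots,p+1\}$ ($\mathbf e_i$ the canonical basis of $\mathbb R^{p+1}$), endowed with the Euclidean norm of the coefficient array (the norm of the inner product making the canonical basis orthonormal; a crossnorm); $B(\mathbf 0,L)$ denotes balls in this norm. The order-lowering map $\pi_l:T^{l+1}(\mathbb R^{p+1})\to T^{l}(\mathbb R^{p+1})$ is linear with $\pi_l(\sum a_{i_1\dots i_{l+1}}\mathbf e_{i_1}\otimes\cdots\otimes\mathbf e_{i_{l+1}})=\sum a_{1,i_2\dots i_{l+1}}\mathbf e_{i_2}\otimes\cdots\otimes\mathbf e_{i_{l+1}}$. For $z\in\mathbb R$, $\widetilde{\mathbf z}:=\sum_{i=1}^{p+1}z^{i-1}\mathbf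 e_i\in\mathbb R^{p+1}$; for a sequence $\mathbf z=(z_t)_{t\in\mathbb Z_-}$, $\widetilde{\mathbf z}_t$ is this vector for $z_t$ and $\widehat{\mathbf z}_t:=\widetilde{\mathbf z}_{t-l}\otimes\cdots\otimes\widetilde{\mathbf z}_t\in T^{l+1}(\mathbb R^{p+1})$. A set $I_0\subset\{1,\dots,p+1\}$ with $1\in I_0$ and cardinality $>1$ is fixed, and $\widehat{\mathbf z}^0:=\sum_{i\in I_0}z^{i-1}\mathbf e_1\otimes\cdots\otimes\mathbf e_1\otimes\mathbf e_i$ ($l$ factors $\mathbf e_1$), with $\widehat{\mathbf z}^0_t$ the same expression for $z_t$. A state map $F$ has the echo state property (ESP) on inputs $K_M$ if for every $\mathbf z\in K_M$ there is a unique state sequence $(\mathbf x_t)_{t\in\mathbb Z_-}$ in the state space with $\mathbf x_t=F(\mathbf x_{t-1},z_t)$ for all $t$; the associated filter maps $\mathbf z$ to this sequence. The fading memory property (FMP) means continuity of the filter w.r.t. product topologies. $K_L$ denotes sequences with all terms of norm $\le L$. *)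

(* Defs.v *)
From HB Require Import structures.
From mathcomp Require Import all_boot all_order all_algebra.
From mathcomp Require Import all_classical all_reals all_analysis.
Unset Printing Implicit Defensive.
Import Order.TTheory GRing.Theory Num.Theory numFieldNormedType.Exports.
Local Open Scope ring_scope.
Local Open Scope classical_set_scope.

Section SigSAS.
Variables (R : realType) (p : nat).

(* multi-indices (i_1,...,i_n), each i_k in {0,...,p} (0-based: index k of the
   paper's e_{k+1}) *)
Definition idx (n : nat) := {ffun 'I_n -> 'I_p.+1}.

(* T^n(R^{p+1}) as arrays of coefficients, with the product (= norm) topology *)
Definition tensor (n : nat) := {ptws idx n -> R}.

Definition tnorm n (x : tensor n) : R := Num.sqrt (\sum_(i : idx n) x i ^+ 2).

Definition tsub n (x y : tensor n) : tensor n := fun i => x i - y i.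

(* order-lowering map pi_n : T^{n+1} -> T^n, keeps the coefficients whose first
   index is e_1 *)
Definition pi_low n (x : tensor n.+1) : tensor n :=
  fun i => x [ffun k : 'I_n.+1 =>
               match unlift ord0 k with Some k' => i k' | None => ord0 end].

Definition tens n (x : tensor n) (v : 'I_p.+1 -> R) : tensor n.+1 :=
  fun i => x [ffun k : 'I_n => i (widen_ord (leqnSn n) k)] * v (i ord_max).

Definition ztilde (z : R) : 'I_p.+1 -> R := fun i => z ^+ i.

Definition zhat0 (l : nat) (I0 : {set 'I_p.+1}) (z : R) : tensor l.+1 :=
  fun i => if [forall k : 'I_l, i (widen_ord (leqnSn l) k) == ord0]
              && (i ord_max \in I0)
           then z ^+ (i ord_max) else 0.

(* Input sequences (z_t)_{t in Z_-} are encoded as zz : nat -> R with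
   zz n = z_{-n}. *)

(* zhat_t = z~_{t-l} (x) ... (x) z~_t; the k-th factor (k = 0..l) is z~_{t-l+k},
   i.e. zz (n + (l - k)) when t = -n *)
Definition zhat (l : nat) (zz : nat -> R) (n : nat) : tensor l.+1 :=
  fun i => \prod_(k < l.+1) ztilde (zz (n + (l - k))%N) (i k).

Definition FSigSAS (lam : R) (l : nat) (I0 : {set 'I_p.+1})
  (x : tensor l.+1) (z : R) : tensor l.+1 :=
  fun i => lam * tens l (pi_low l x) (ztilde z) i + zhat0 l I0 z i.

(* Psi^(r) for Phi_j(z)_t, t = -n:  Psi^(0) = zhat0(z_{t-j}),
   Psi^(r) = pi(Psi^(r-1)) (x) z~_{t-j+r}, with z_{t-j+r} = zz (n + j - r) *)
Fixpoint Psi (l : nat) (I0 : {set 'I_p.+1}) (zz : nat -> R) (n j r : nat)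
  : tensor l.+1 :=
  match r with
  | 0 => zhat0 l I0 (zz (n + j)%N)
  | r'.+1 => tens l (pi_low l (Psi l I0 zz n j r')) (ztilde (zz (n + j - r'.+1)%N))
  end.

Definition Phi (l : nat) (I0 : {set 'I_p.+1}) (j : nat) (zz : nat -> R) (n : nat)
  : tensor l.+1 := Psi l I0 zz n j j.

Definition USigSAS (lam : R) (l : nat) (I0 : {set 'I_p.+1})
  (zz : {ptws nat -> R}) : {ptws nat -> tensor l.+1} :=
  fun n => fun i => lam ^+ l.+1 / (1 - lam) * zhat l zz n i
                    + \sum_(j < l.+1) lam ^+ j * Phi l I0 j zz n i.

End SigSAS.

Definition KM (R : realType) (M : R) : set {ptws nat -> R} :=
  [set zz | forall n, `|zz n| <= M].

(* Echo state property of the state map F with state space S on inputs K: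
   every input sequence admits a unique state sequence in S
   (x_t = F(x_{t-1}, z_t), i.e. xs n = F (xs n.+1) (zz n)). *)
Definition ESP {R : realType} {X : Type} (S : set X) (F : X -> R -> X)
  (K : set (nat -> R)) : Prop :=
  forall zz, K zz -> exists! xs : nat -> X,
    (forall n, S (xs n)) /\ (forall n, xs n = F (xs n.+1) (zz n)).

(* Main.v *)
Require Import Defs.
From HB Require Import structures.
From mathcomp Require Import all_boot all_order all_algebra.
From mathcomp Require Import all_classical all_reals all_analysis.
From mathcomp Require Import ring lra zify.
Import Order.TTheory GRing.Theory Num.Theory numFieldNormedType.Exports.
Local Open Scope ring_scope.
Local Open Scope classical_set_scope.
Set Implicit Arguments. Unset Strict Implicit.

Lemma sqrt_le_sq (R : realType) (a b : R) : 0 <= b -> a <= b ^+ 2 -> Num.sqrt a <= b.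
Proof.
move=> b0 ab; rewrite -(ger0_norm b0) -sqrtr_sqr ler_sqrt //; exact: sqr_ge0.
Qed.

Lemma term_le_sum (R : realType) (I : finType) (F : I -> R) (a : I) :
  (forall i, 0 <= F i) -> F a <= \sum_i F i.
Proof.
move=> F0; rewrite (bigD1 a) //= lerDl; exact: sumr_ge0.
Qed.

Lemma sum_sq_le (R : realType) (I : finType) (F : I -> R) :
  (forall i, 0 <= F i) -> \sum_i F i ^+ 2 <= (\sum_i F i) ^+ 2.
Proof.
move=> F0; rewrite expr2 big_distrl /=; apply: ler_sum => i _.
rewrite expr2; apply: ler_wpM2l => //; exact: term_le_sum.
Qed.

Lemma sqrt_sum_le_abs (R : realType) (I : finType) (F : I -> R) :
  Num.sqrt (\sum_i F i ^+ 2) <= \sum_i `|F i|.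
Proof.
apply: sqrt_le_sq; first by apply: sumr_ge0 => i _.
have H := @sum_sq_le _ _ (fun i => `|F i|) (fun i => normr_ge0 _).
apply: le_trans; last exact: H.
by apply: ler_sum => i _; rewrite real_normK // num_real.
Qed.

Lemma cs_fin (R : realType) (I : finType) (f g : I -> R) :
  (\sum_i f i * g i) ^+ 2 <= (\sum_i f i ^+ 2) * (\sum_i g i ^+ 2).
Proof.
set A := \sum_i f i ^+ 2; set B := \sum_i g i ^+ 2; set C := \sum_i f i * g i.
have B0 : 0 <= B by apply: sumr_ge0 => i _; exact: sqr_ge0.
have A0 : 0 <= A by apply: sumr_ge0 => i _; exact: sqr_ge0.
have key t : 0 <= A + 2 * t * C + t ^+ 2 * B.
  have -> : A + 2 * t * C + t ^+ 2 * B = \sum_i (f i + t * g i) ^+ 2.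
    rewrite /A /C /B mulr_sumr mulr_sumr -!big_split /=.
    by apply: eq_bigr => i _; ring.
  by apply: sumr_ge0 => i _; exact: sqr_ge0.
have [Bz|Bnz] := eqVneq B 0.
  have gz i : g i = 0.
    have H : g i ^+ 2 = 0 := psumr_eq0P (fun i _ => sqr_ge0 (g i)) Bz isT.
    by apply/eqP; rewrite -sqrf_eq0 H.
  by rewrite /C big1 ?expr0n ?mulr_ge0 // => i _; rewrite gz mulr0.
have Bp : 0 < B by rewrite lt_def Bnz B0.
have := key (- C / B).
have -> : A + 2 * (- C / B) * C + (- C / B) ^+ 2 * B = A - C ^+ 2 / B.
  by field; rewrite gt_eqF.
rewrite subr_ge0 ler_pdivrMr //.
Qed.

Lemma minkowski_fin (R : realType) (I : finType) (f g : I -> R) :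
  Num.sqrt (\sum_i (f i + g i) ^+ 2) <=
  Num.sqrt (\sum_i f i ^+ 2) + Num.sqrt (\sum_i g i ^+ 2).
Proof.
set A := \sum_i f i ^+ 2; set B := \sum_i g i ^+ 2.
have B0 : 0 <= B by apply: sumr_ge0 => i _; exact: sqr_ge0.
have A0 : 0 <= A by apply: sumr_ge0 => i _; exact: sqr_ge0.
apply: sqrt_le_sq; first by rewrite addr_ge0 // sqrtr_ge0.
have -> : \sum_i (f i + g i) ^+ 2 = A + 2 * (\sum_i f i * g i) + B.
  rewrite /A /B mulr_sumr -!big_split /=; apply: eq_bigr => i _; ring.
have -> : (Num.sqrt A + Num.sqrt B) ^+ 2 = A + 2 * (Num.sqrt A * Num.sqrt B) + B.
  by rewrite sqrrD !sqr_sqrtr // -mulr_natr; ring.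
rewrite lerD2r lerD2l ler_pM2l //.
have := cs_fin f g; rewrite -/A -/B -sqrtrM // => H.
apply: le_trans (ler_norm _) _.
rewrite -sqrtr_sqr; apply: ler_wsqrtr; exact: H.
Qed.

Lemma prod_ind (R : realType) (I : finType) (P : pred I) :
  \prod_i ((P i)%:R : R) = ([forall i, P i])%:R.
Proof.
case: forallP => H; first by rewrite big1 // => i _; rewrite H.
have /forallPn [i Hi] : ~~ [forall i, P i] by apply/forallP.
by rewrite (bigD1 i) //= (negbTE Hi) mul0r.
Qed.

Lemma geo_zero (R : realType) (e : nat -> R) (q B : R) :
  0 <= q -> q < 1 -> (forall n, e n <= q * e n.+1) -> (forall n, e n <= B) ->
  forall n, e n <= 0.
Proof.
move=> q0 q1 He HB.
set B' := Num.max B 0.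
have B'0 : 0 <= B' by rewrite le_max lexx orbT.
have Hk k : forall n, e n <= q ^+ k * B'.
  elim: k => [|k IH] n; first by rewrite expr0 mul1r; apply: le_trans (HB n) _; rewrite le_max lexx.
  apply: le_trans (He n) _; rewrite exprS -mulrA; apply: ler_wpM2l => //.
move=> n; rewrite leNgt; apply/negP => en.
have qn : `|q| < 1 by rewrite ger0_norm.
have eps0 : 0 < e n / (B' + 1) by rewrite divr_gt0 // ltr_pwDr.
have /cvgrPdist_lt /(_ _ eps0) [N _ HN] := cvg_expr qn.
have := HN N (leqnn N); rewrite /= sub0r normrN ger0_norm ?exprn_ge0 // => Hl.
have := Hk N n.
have : q ^+ N * B' < e n.
  apply: (@le_lt_trans _ _ (q ^+ N * (B' + 1))).
    by apply: ler_wpM2l; [exact: exprn_ge0 | rewrite lerDl].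
  by rewrite -ltr_pdivlMr // ltr_pwDr.
move=> H1 H2; have := le_lt_trans H2 H1; by rewrite ltxx.
Qed.

Lemma widen_lift n (k : 'I_n) : widen_ord (leqnSn n) k = lift ord_max k.
Proof. by apply: val_inj; rewrite /= /bump leqNgt ltn_ord. Qed.

Definition tjoin p n (ya : idx p n * 'I_p.+1) : idx p n.+1 :=
  [ffun k => if unlift ord_max k is Some k' then ya.1 k' else ya.2].
Definition tsplit p n (i : idx p n.+1) : idx p n * 'I_p.+1 :=
  ([ffun k => i (widen_ord (leqnSn n) k)], i ord_max).

Lemma tsplitK p n : cancel (@tjoin p n) (@tsplit p n).
Proof.
move=> [y a]; rewrite /tsplit /tjoin; congr (_, _).
  by apply/ffunP => k; rewrite !ffunE widen_lift liftK.
by rewrite ffunE unlift_none.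
Qed.

Lemma tjoinK p n : cancel (@tsplit p n) (@tjoin p n).
Proof.
move=> i; apply/ffunP => k; rewrite /tsplit /tjoin ffunE.
case: unliftP => [k' ->|-> //]; by rewrite /= ffunE widen_lift.
Qed.

Lemma sum_split (R : realType) p n (f : idx p n -> R) (g : 'I_p.+1 -> R) :
  \sum_(i : idx p n.+1) f (tsplit i).1 * g (tsplit i).2 =
  (\sum_y f y) * (\sum_a g a).
Proof.
rewrite (reindex (@tjoin p n)); last by exists (@tsplit p n) => x _; [exact: tsplitK|exact: tjoinK].
under eq_bigr do rewrite tsplitK.
rewrite -(pair_big xpredT xpredT (fun y a => f y * g a)) /= big_distrl /=.
by apply: eq_bigr => y _; rewrite big_distrr.
Qed.

Lemma tens_sq (R : realType) p n (x : tensor R p n) v :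
  \sum_i (tens R p n x v i) ^+ 2 = (\sum_y x y ^+ 2) * (\sum_a v a ^+ 2).
Proof.
rewrite -sum_split; apply: eq_bigr => i _; by rewrite /tens exprMn.
Qed.

Definition emb p n (i : idx p n) : idx p n.+1 :=
  [ffun k : 'I_n.+1 => match unlift ord0 k with Some k' => i k' | None => ord0 end].

Lemma emb_inj p n : injective (@emb p n).
Proof.
move=> i1 i2 H; apply/ffunP => k.
have := congr1 (fun f : idx p n.+1 => f (lift ord0 k)) H; by rewrite /= !ffunE liftK.
Qed.

Lemma pi_sq (R : realType) p n (x : tensor R p n.+1) :
  \sum_i (pi_low R p n x i) ^+ 2 <= \sum_j x j ^+ 2.
Proof.
set A := ((@emb p n) @: [set: idx p n])%SET.
have -> : \sum_i (pi_low R p n x i) ^+ 2 = \sum_(j in A) x j ^+ 2.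
  rewrite big_imset /=; last by move=> ? ? _ _; exact: emb_inj.
  apply: eq_big => [i|i _]; first by rewrite !inE.
  by rewrite /pi_low /emb.
rewrite [\sum_j x j ^+ 2](bigID (fun j => j \in A)) /= lerDl.
by apply: sumr_ge0 => i _; exact: sqr_ge0.
Qed.

Lemma Mt_term (R : realType) p (M : R) (a : 'I_p.+1) : 0 <= M ->
  M ^+ a <= \sum_(j < p.+1) M ^+ j.
Proof. move=> M0; apply: (@term_le_sum _ _ (fun j : 'I_p.+1 => M ^+ j)) => j; exact: exprn_ge0. Qed.

Lemma Mt_ge1 (R : realType) p (M : R) : 0 <= M -> 1 <= \sum_(j < p.+1) M ^+ j.
Proof. by move=> M0; have := Mt_term (@ord0 p) M0; rewrite expr0. Qed.

Lemma ztilde_sq (R : realType) p (M z : R) : `|z| <= M ->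
  \sum_a (ztilde R p z a) ^+ 2 <= (\sum_(j < p.+1) M ^+ j) ^+ 2.
Proof.
move=> zM; have M0 : 0 <= M by apply: le_trans zM.
have -> : \sum_a (ztilde R p z a) ^+ 2 = \sum_(a < p.+1) (`|z| ^+ a) ^+ 2.
  by apply: eq_bigr => a _; rewrite /ztilde -normrX real_normK // num_real.
apply: le_trans (@sum_sq_le _ _ (fun a : 'I_p.+1 => `|z| ^+ a) (fun a => exprn_ge0 _ (normr_ge0 _))) _.
apply: lerXn2r; rewrite ?inE; first by apply: sumr_ge0 => a _; exact: exprn_ge0.
  by apply: sumr_ge0 => a _; exact: exprn_ge0.
apply: ler_sum => a _; apply: lerXn2r => //; rewrite ?inE //; exact: exprn_ge0.
Qed.

Lemma zhat0_sq (R : realType) p l (I0 : {set 'I_p.+1}) (M z : R) : `|z| <= M ->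
  \sum_i (zhat0 R p l I0 z i) ^+ 2 <= (\sum_(j < p.+1) M ^+ j) ^+ 2.
Proof.
move=> zM.
pose D : tensor R p l := fun y => ([forall k, y k == ord0])%:R.
pose w : 'I_p.+1 -> R := fun a => if a \in I0 then z ^+ a else 0.
have -> : \sum_i (zhat0 R p l I0 z i) ^+ 2 = \sum_i (tens R p l D w i) ^+ 2.
  apply: eq_bigr => i _; congr (_ ^+ 2).
  rewrite /tens /zhat0 /D /w.
  have -> : [forall k, [ffun k => i (widen_ord (leqnSn l) k)] k == ord0] =
            [forall k, i (widen_ord (leqnSn l) k) == ord0].
    by apply: eq_forallb => k; rewrite ffunE.
  by case: [forall k, _]; case: (i ord_max \in I0); rewrite ?mul1r ?mul0r ?mulr0.
rewrite tens_sq.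
have -> : \sum_y D y ^+ 2 = 1.
  pose y0 : idx p l := [ffun => ord0].
  rewrite (bigD1 y0) //= big1 ?addr0.
    rewrite /D; have -> : [forall k, y0 k == ord0] by apply/forallP => k; rewrite ffunE.
    by rewrite expr1n.
  move=> y Hy; rewrite /D; case: forallP => H; last by rewrite expr0n.
  exfalso; move/negP: Hy; apply.
  by apply/eqP/ffunP => k; rewrite /y0 ffunE; apply/eqP.
rewrite mul1r; apply: le_trans (ztilde_sq p zM); apply: ler_sum => a _.
rewrite /w /ztilde; case: (a \in I0) => //; rewrite expr0n /=; exact: sqr_ge0.
Qed.

Lemma tnorm_ge0 (R : realType) p n (x : tensor R p n) : 0 <= tnorm R p n x.
Proof. exact: sqrtr_ge0. Qed.

Lemma K1 (R : realType) p l (M z : R) (x : tensor R p l.+1) : `|z| <= M ->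
  \sum_i (tens R p l (pi_low R p l x) (ztilde R p z) i) ^+ 2 <=
  ((\sum_(j < p.+1) M ^+ j) * tnorm R p l.+1 x) ^+ 2.
Proof.
move=> zM; rewrite tens_sq exprMn [X in _ <= X]mulrC /tnorm sqr_sqrtr; last by apply: sumr_ge0 => i _; exact: sqr_ge0.
apply: ler_pM.
- by apply: sumr_ge0 => i _; exact: sqr_ge0.
- by apply: sumr_ge0 => i _; exact: sqr_ge0.
- exact: pi_sq.
- exact: ztilde_sq.
Qed.

Lemma F_contr (R : realType) p l (I0 : {set 'I_p.+1}) (M lam z : R)
  (x1 x2 : tensor R p l.+1) : 0 <= lam -> `|z| <= M ->
  tnorm R p l.+1 (tsub R p l.+1 (FSigSAS R p lam l I0 x1 z) (FSigSAS R p lam l I0 x2 z))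
  <= lam * (\sum_(j < p.+1) M ^+ j) * tnorm R p l.+1 (tsub R p l.+1 x1 x2).
Proof.
move=> lam0 zM; rewrite /tnorm -/(tnorm R p l.+1 (tsub R p l.+1 x1 x2)).
apply: sqrt_le_sq; first by rewrite mulr_ge0 ?tnorm_ge0 // mulr_ge0 // sumr_ge0 // => j _; rewrite exprn_ge0 // (le_trans _ zM).
have -> : \sum_i tsub R p l.+1 (FSigSAS R p lam l I0 x1 z) (FSigSAS R p lam l I0 x2 z) i ^+ 2
  = lam ^+ 2 * \sum_i (tens R p l (pi_low R p l (tsub R p l.+1 x1 x2)) (ztilde R p z) i) ^+ 2.
  rewrite mulr_sumr; apply: eq_bigr => i _.
  rewrite /tsub /FSigSAS /tens /pi_low /=; ring.
rewrite -mulrA exprMn; apply: ler_wpM2l; first exact: sqr_ge0.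
exact: K1.
Qed.

Lemma F_bound (R : realType) p l (I0 : {set 'I_p.+1}) (M lam z : R)
  (x : tensor R p l.+1) : 0 <= lam -> `|z| <= M ->
  tnorm R p l.+1 (FSigSAS R p lam l I0 x z)
  <= lam * ((\sum_(j < p.+1) M ^+ j) * tnorm R p l.+1 x) + \sum_(j < p.+1) M ^+ j.
Proof.
move=> lam0 zM; have M0 : 0 <= M by apply: le_trans zM.
have Mt0 : 0 <= \sum_(j < p.+1) M ^+ j by apply: sumr_ge0 => j _; exact: exprn_ge0.
rewrite /tnorm /FSigSAS.
apply: le_trans (minkowski_fin _ _) _; apply: lerD.
  apply: sqrt_le_sq; first by rewrite mulr_ge0 // mulr_ge0 // sqrtr_ge0.
  under eq_bigr do rewrite exprMn.
  rewrite -mulr_sumr [X in _ <= X]exprMn; apply: ler_wpM2l; first exact: sqr_ge0.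
  exact: K1.
by apply: sqrt_le_sq => //; exact: zhat0_sq.
Qed.

Definition hfun (R : realType) p l (I0 : {set 'I_p.+1}) (zz : nat -> R) n j
  (m : nat) (a : 'I_p.+1) : R :=
  if (m <= l)%N then
    (if (m < l)%N then (a == ord0)%:R else if a \in I0 then zz (n + j)%N ^+ a else 0)
  else ztilde R p (zz (n + j - (m - l))%N) a.

Lemma Psi_prod (R : realType) p l (I0 : {set 'I_p.+1}) (zz : nat -> R) n j :
  ord0 \in I0 -> forall r i,
  Psi R p l I0 zz n j r i = \prod_(k < l.+1) hfun l I0 zz n j (k + r) (i k).
Proof.
move=> I00; elim=> [|r IH] i.
  rewrite /= /zhat0 big_ord_recr /= addn0.
  have -> : \prod_(k < l) hfun l I0 zz n j (widen_ord (leqnSn l) k + 0) (i (widen_ord (leqnSn l) k))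
      = \prod_(k < l) ((i (widen_ord (leqnSn l) k) == ord0)%:R).
    apply: eq_bigr => k _; rewrite /hfun addn0 /= ltnW // ltn_ord //.
  rewrite prod_ind /hfun leqnn ltnn.
  by case: [forall k, _]; case: (i ord_max \in I0); rewrite ?mul1r ?mul0r.
rewrite /= /tens /pi_low IH big_ord_recl big_ord_recr /=.
have -> : hfun l I0 zz n j (0 + r) ([ffun k => match unlift ord0 k with
                  | Some k' => [ffun k0 => i (widen_ord (leqnSn l) k0)] k'
                  | None => ord0 end] ord0) = 1.
  rewrite ffunE unlift_none /hfun add0n.
  by case: leqP => _; case: leqP => _; rewrite ?eqxx ?I00 /ztilde /= ?expr0.
rewrite mul1r; congr (_ * _).
  apply: eq_bigr => k _; rewrite ffunE liftK ffunE; congr (hfun _ _ _ _ _ _ _).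
  by rewrite /bump /= add1n addSnnS.
have H : (l + r.+1 <= l)%N = false by apply/negbTE; rewrite -ltnNge; lia.
by rewrite /hfun H addKn.
Qed.

Lemma Psi_shift (R : realType) p l (I0 : {set 'I_p.+1}) (zz : nat -> R) n j r :
  Psi R p l I0 zz n j.+1 r = Psi R p l I0 zz n.+1 j r.
Proof.
elim: r => [|r IH] /=; first by rewrite addnS addSn.
by rewrite IH addnS addSn.
Qed.

Lemma Phi_big (R : realType) p l (I0 : {set 'I_p.+1}) (zz : nat -> R) n j :
  ord0 \in I0 -> (l < j)%N -> Phi R p l I0 j zz n = zhat R p l zz n.
Proof.
move=> I00 lj; apply: funext => i; rewrite /Phi Psi_prod // /zhat.
apply: eq_bigr => k _; rewrite /hfun.
have -> : (k + j <= l)%N = false by apply/negbTE; rewrite -ltnNge; lia.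
have kl := ltn_ord k.
by congr (ztilde _ _ (zz _) _); lia.
Qed.

Lemma Phi_step (R : realType) p l (I0 : {set 'I_p.+1}) (zz : nat -> R) n j :
  Phi R p l I0 j.+1 zz n =
  tens R p l (pi_low R p l (Phi R p l I0 j zz n.+1)) (ztilde R p (zz n)).
Proof. by rewrite /Phi /= Psi_shift addnK. Qed.

Lemma U_rec (R : realType) p l (I0 : {set 'I_p.+1}) (lam : R) (zz : {ptws nat -> R}) n :
  ord0 \in I0 -> lam < 1 ->
  USigSAS R p lam l I0 zz n = FSigSAS R p lam l I0 (USigSAS R p lam l I0 zz n.+1) (zz n).
Proof.
move=> I00 lam1; apply: funext => i.
set c := lam ^+ l.+1 / (1 - lam).
set P := fun j => Phi R p l I0 j zz n i.
have Hlin : tens R p l (pi_low R p l (USigSAS R p lam l I0 zz n.+1)) (ztilde R p (zz n)) i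
   = c * tens R p l (pi_low R p l (zhat R p l zz n.+1)) (ztilde R p (zz n)) i
     + \sum_(j < l.+1) lam ^+ j *
         tens R p l (pi_low R p l (Phi R p l I0 j zz n.+1)) (ztilde R p (zz n)) i.
  rewrite /tens /pi_low /USigSAS mulrDl big_distrl /= -/c.
  congr (_ + _); first by rewrite mulrA.
  by apply: eq_bigr => j _; rewrite mulrA.
rewrite /FSigSAS Hlin.
under [X in _ = _ * (_ + X) + _]eq_bigr do rewrite -Phi_step.
rewrite -(@Phi_big R p l I0 zz n.+1 l.+1 I00 (ltnSn l)) -Phi_step (@Phi_big R p l I0 zz n l.+2 I00 (ltnW (ltnSn l.+1))).
have -> : zhat0 R p l I0 (zz n) i = P 0%N by rewrite /P /Phi /= addn0.
rewrite /USigSAS -/c -/P.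
rewrite [in LHS]big_ord_recl [in RHS]big_ord_recr /=.
rewrite (@Phi_big R p l I0 zz n l.+1 I00 (ltnSn l)).
have HS : \sum_(j < l) lam ^+ (lift ord0 j) * Phi R p l I0 (lift ord0 j) zz n i
   = lam * \sum_(j < l) lam ^+ j * Phi R p l I0 j.+1 zz n i.
  rewrite mulr_sumr; apply: eq_bigr => j _; by rewrite lift0 exprS mulrA.
rewrite HS /P expr0 mul1r.
set Z := zhat R p l zz n i; set S := \sum_(j < l) _; set P0 := Phi _ _ _ _ _ _ _ _.
rewrite /c exprS; set q := lam ^+ l.
have H1 : 1 - lam != 0 by rewrite subr_eq0 eq_sym lt_eqF.
field.
by [].
Qed.

Lemma cvg_bsum (T : topologicalType) (R : realType) (I : Type) (s : seq I) (F : I -> T -> R) (x : T) :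
  (forall i, F i @ x --> F i x) ->
  (fun y => \sum_(i <- s) F i y) @ x --> \sum_(i <- s) F i x.
Proof.
move=> HF; elim: s => [|a s IH].
  have -> : (fun y => \sum_(i <- [::]) F i y) = (fun=> 0) by apply: funext => y; rewrite big_nil.
  rewrite big_nil; exact: cvg_cst.
have -> : (fun y => \sum_(i <- a :: s) F i y) = (fun y => F a y + \sum_(i <- s) F i y)
  by apply: funext => y; rewrite big_cons.
rewrite big_cons; exact: cvgD.
Qed.

Lemma cvg_bprod (T : topologicalType) (R : realType) (I : Type) (s : seq I) (F : I -> T -> R) (x : T) :
  (forall i, F i @ x --> F i x) ->
  (fun y => \prod_(i <- s) F i y) @ x --> \prod_(i <- s) F i x.
Proof.
move=> HF; elim: s => [|a s IH].
  have -> : (fun y => \prod_(i <- [::]) F i y) = (fun=> 1) by apply: funext => y; rewrite big_nil.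
  rewrite big_nil; exact: cvg_cst.
have -> : (fun y => \prod_(i <- a :: s) F i y) = (fun y => F a y * \prod_(i <- s) F i y)
  by apply: funext => y; rewrite big_cons.
rewrite big_cons; exact: cvgM.
Qed.

Lemma cont_coord (R : realType) (m : nat) (zz : {ptws nat -> R}) :
  (fun g : {ptws nat -> R} => g m) @ zz --> zz m.
Proof.
have : {ptws, nbhs zz --> zz} by [].
move/pointwise_cvgP => /(_ m); exact.
Qed.

Lemma cont_pow (R : realType) (m a : nat) (zz : {ptws nat -> R}) :
  (fun g : {ptws nat -> R} => g m ^+ a) @ zz --> zz m ^+ a.
Proof.
have -> : (fun g : {ptws nat -> R} => g m ^+ a) = (fun g : {ptws nat -> R} => \prod_(k < a) g m).
  by apply: funext => g; rewrite prodr_const card_ord.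
rewrite (_ : zz m ^+ a = \prod_(k < a) zz m); last by rewrite prodr_const card_ord.
exact: (@cvg_bprod _ R _ _ (fun _ (g : {ptws nat -> R}) => g m) zz (fun _ => @cont_coord R m zz)).
Qed.

Lemma cont_ptws (R : realType) p l (U : {ptws nat -> R} -> {ptws nat -> tensor R p l.+1}) :
  (forall n (i : idx p l.+1) (zz : {ptws nat -> R}), (fun g : {ptws nat -> R} => U g n i : R) @ zz --> U zz n i) ->
   continuous U.
Proof.
move=> H zz.
have F1 := (@fmap_filter _ _ U _ (nbhs_filter zz)).
have P1 := (@pointwise_cvgP nat (tensor R p l.+1) (U @ zz) (U zz) F1).
apply P1 => n.
have F2 := (@fmap_filter _ _ (fun g : {ptws nat -> tensor R p l.+1} => g n) _ F1).
have P2 := (@pointwise_cvgP (discrete_topology (idx p l.+1)) R ((fun g : {ptws nat -> tensor R p l.+1} => g n) @ (U @ zz)) (U zz n) F2).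
apply P2 => i.
exact: (H n i zz).
Qed.

Lemma cont_hfun (R : realType) p l (I0 : {set 'I_p.+1}) n j m (a : 'I_p.+1) (zz : {ptws nat -> R}) :
  (fun g : {ptws nat -> R} => hfun l I0 g n j m a) @ zz --> hfun l I0 zz n j m a.
Proof.
rewrite /hfun /ztilde.
case: (m <= l)%N; last exact: (@cont_pow R _ a zz).
case: (m < l)%N; first exact: (@cvg_cst _ _ _ (nbhs zz) _).
case: (a \in I0); last exact: (@cvg_cst _ _ _ (nbhs zz) _).
exact: (@cont_pow R _ a zz).
Qed.
Lemma cvg_lin (T : topologicalType) (R : realType) (x : T) (c : R) (f g : T -> R) (a b : R) :
  f @ x --> a -> g @ x --> b -> (fun y => c * f y + g y) @ x --> c * a + b.
Proof.
move=> Hf Hg; apply: cvgD => //; apply: cvgM => //; exact: cvg_cst.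
Qed.

Lemma cvg_scal (T : topologicalType) (R : realType) (x : T) (c : R) (f : T -> R) (a : R) :
  f @ x --> a -> (fun y => c * f y) @ x --> c * a.
Proof.
move=> Hf; apply: cvgM => //; exact: cvg_cst.
Qed.
Lemma cont_U (R : realType) p l (I0 : {set 'I_p.+1}) (lam : R) :
  ord0 \in I0 -> continuous (USigSAS R p lam l I0).
Proof.
move=> I00; apply: cont_ptws => n i zz.
rewrite /USigSAS.
have -> : (fun g : {ptws nat -> R} => lam ^+ l.+1 / (1 - lam) * zhat R p l g n i +
     \sum_(j < l.+1) lam ^+ j * Phi R p l I0 j g n i) =
   (fun g : {ptws nat -> R} => lam ^+ l.+1 / (1 - lam) * \prod_(k < l.+1) ztilde R p (g (n + (l - k))%N) (i k) +
     \sum_(j < l.+1) lam ^+ j * \prod_(k < l.+1) hfun l I0 g n j (k + j) (i k)).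
  apply: funext => g; congr (_ + _); apply: eq_bigr => j _; by rewrite /Phi Psi_prod.
rewrite /zhat.
have -> : \sum_(j < l.+1) lam ^+ j * Phi R p l I0 j zz n i =
  \sum_(j < l.+1) lam ^+ j * \prod_(k < l.+1) hfun l I0 zz n j (k + j) (i k).
  by apply: eq_bigr => j _; rewrite /Phi Psi_prod.
apply: cvg_lin.
  apply: cvg_bprod => k; exact: cont_pow.
apply: cvg_bsum => j; apply: cvg_scal.
apply: cvg_bprod => k; exact: cont_hfun.
Qed.
Lemma pow_bound (R : realType) p (M z : R) (a : 'I_p.+1) : `|z| <= M ->
  `|z ^+ a| <= \sum_(j < p.+1) M ^+ j.
Proof.
move=> zM; have M0 : 0 <= M by apply: le_trans zM.
rewrite normrX; apply: le_trans (Mt_term a M0); apply: lerXn2r; rewrite ?inE //.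
Qed.

Lemma hfun_bound (R : realType) p l (I0 : {set 'I_p.+1}) (M : R) (zz : nat -> R) n j m a :
  0 <= M -> (forall k, `|zz k| <= M) ->
  `|hfun l I0 zz n j m a| <= \sum_(j < p.+1) M ^+ j.
Proof.
move=> M0 Hz; rewrite /hfun /ztilde.
case: (m <= l)%N; last exact: pow_bound.
case: (m < l)%N.
  case: (a == ord0); rewrite ?normr1 ?normr0; first exact: Mt_ge1.
  by apply: sumr_ge0 => k _; exact: exprn_ge0.
case: (a \in I0); first exact: pow_bound.
by rewrite normr0; apply: sumr_ge0 => k _; exact: exprn_ge0.
Qed.

Lemma Psi_bound (R : realType) p l (I0 : {set 'I_p.+1}) (M : R) (zz : nat -> R) n j r i :
  ord0 \in I0 -> 0 <= M -> (forall k, `|zz k| <= M) ->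
  `|Psi R p l I0 zz n j r i| <= (\sum_(j < p.+1) M ^+ j) ^+ l.+1.
Proof.
move=> I00 M0 Hz; rewrite Psi_prod // normr_prod.
have -> : (\sum_(j < p.+1) M ^+ j) ^+ l.+1 = \prod_(k < l.+1) \sum_(j < p.+1) M ^+ j
  by rewrite prodr_const card_ord.
by apply: ler_prod => k _; rewrite normr_ge0 /=; exact: hfun_bound.
Qed.

Lemma U_coef_bound (R : realType) p l (I0 : {set 'I_p.+1}) (M lam : R) (zz : {ptws nat -> R}) n i :
  ord0 \in I0 -> 0 <= M -> (forall k, `|zz k| <= M) -> 0 < lam -> lam < 1 ->
  `|USigSAS R p lam l I0 zz n i| <=
    lam ^+ l.+1 / (1 - lam) * (\sum_(j < p.+1) M ^+ j) ^+ l.+1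
    + \sum_(j < l.+1) lam ^+ j * (\sum_(j < p.+1) M ^+ j) ^+ l.+1.
Proof.
move=> I00 M0 Hz lam0 lam1.
have c0 : 0 <= lam ^+ l.+1 / (1 - lam) by rewrite divr_ge0 ?exprn_ge0 ?ltW // subr_gt0.
rewrite /USigSAS; apply: le_trans (ler_normD _ _) _; apply: lerD.
  rewrite normrM (ger0_norm c0); apply: (@ler_wpM2l R) => //.
  rewrite -(@Phi_big R p l I0 zz n l.+1 I00 (ltnSn l)); exact: Psi_bound.
apply: le_trans (ler_norm_sum _ _ _) _; apply: ler_sum => j _.
rewrite normrM (ger0_norm (exprn_ge0 j (ltW lam0))); apply: ler_wpM2l; first by rewrite exprn_ge0 ?ltW.
exact: Psi_bound.
Qed.

Lemma U_crude (R : realType) p l (I0 : {set 'I_p.+1}) (M lam : R) (zz : {ptws nat -> R}) n :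
  ord0 \in I0 -> 0 <= M -> (forall k, `|zz k| <= M) -> 0 < lam -> lam < 1 ->
  tnorm R p l.+1 (USigSAS R p lam l I0 zz n) <=
  \sum_(i : idx p l.+1) (lam ^+ l.+1 / (1 - lam) * (\sum_(j < p.+1) M ^+ j) ^+ l.+1
    + \sum_(j < l.+1) lam ^+ j * (\sum_(j < p.+1) M ^+ j) ^+ l.+1).
Proof.
move=> I00 M0 Hz lam0 lam1; apply: le_trans (sqrt_sum_le_abs _) _.
apply: ler_sum => i _; exact: U_coef_bound.
Qed.

Lemma tsub_le (R : realType) p n (x y : tensor R p n) :
  tnorm R p n (tsub R p n x y) <= tnorm R p n x + tnorm R p n y.
Proof.
rewrite /tnorm /tsub /=.
have H := @minkowski_fin R (idx p n) (fun i => x i : R) (fun i => - y i : R).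
have E : \sum_i (- y i : R) ^+ 2 = \sum_i (y i : R) ^+ 2 by apply: eq_bigr => i _; rewrite sqrrN.
rewrite E in H; exact: H.
Qed.

Lemma tnorm0_eq (R : realType) p n (x y : tensor R p n) :
  tnorm R p n (tsub R p n x y) <= 0 -> x = y.
Proof.
move=> H; apply: funext => i.
have S0 : \sum_i (tsub R p n x y i) ^+ 2 = 0.
  apply/eqP; rewrite eq_le sumr_ge0 ?andbT; last by move=> k _; exact: sqr_ge0.
  by rewrite -sqrtr_eq0 eq_le H sqrtr_ge0.
have := psumr_eq0P (fun k _ => sqr_ge0 (tsub R p n x y k)) S0 (i:=i) isT.
by move/eqP; rewrite sqrf_eq0 subr_eq0 => /eqP.
Qed.
Lemma U_ball (R : realType) p l (I0 : {set 'I_p.+1}) (M lam : R) (zz : {ptws nat -> R}) :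
  ord0 \in I0 -> 0 <= M -> (forall k, `|zz k| <= M) -> 0 < lam -> lam < 1 ->
  lam * (\sum_(j < p.+1) M ^+ j) < 1 ->
  forall n, tnorm R p l.+1 (USigSAS R p lam l I0 zz n) <=
     (\sum_(j < p.+1) M ^+ j) / (1 - lam * (\sum_(j < p.+1) M ^+ j)).
Proof.
move=> I00 M0 Hz lam0 lam1 hq.
set Mt := \sum_(j < p.+1) M ^+ j.
set L := Mt / (1 - lam * Mt).
set B := \sum_(i : idx p l.+1) (lam ^+ l.+1 / (1 - lam) * Mt ^+ l.+1
    + \sum_(j < l.+1) lam ^+ j * Mt ^+ l.+1).
have Mt0 : 0 <= Mt by apply: sumr_ge0 => j _; exact: exprn_ge0.
have hq0 : 1 - lam * Mt != 0 by rewrite subr_eq0 eq_sym lt_eqF.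
move=> n; rewrite -subr_le0.
apply: (@geo_zero R (fun n => tnorm R p l.+1 (USigSAS R p lam l I0 zz n) - L) (lam * Mt) (B - L)).
- by rewrite mulr_ge0 // ltW.
- exact: hq.
- move=> k; rewrite {1}(@U_rec R p l I0 lam zz k I00 lam1).
  set t := tnorm R p l.+1 (USigSAS R p lam l I0 zz k.+1).
  apply: le_trans (lerB (@F_bound R p l I0 M lam (zz k) (USigSAS R p lam l I0 zz k.+1) (ltW lam0) (Hz k)) (lexx L)) _.
  have -> : lam * (Mt * t) + Mt - L = lam * Mt * (t - L) by rewrite /L; field.
  exact: lexx.
- move=> k; rewrite lerB //; exact: U_crude.
Qed.

Lemma sol_unique (R : realType) p l (I0 : {set 'I_p.+1}) (M lam : R) (zz : nat -> R)
  (xs ys : nat -> tensor R p l.+1) :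
  0 <= lam -> (forall k, `|zz k| <= M) -> lam * (\sum_(j < p.+1) M ^+ j) < 1 ->
  (forall n, tnorm R p l.+1 (xs n) <= (\sum_(j < p.+1) M ^+ j) / (1 - lam * (\sum_(j < p.+1) M ^+ j))) ->
  (forall n, tnorm R p l.+1 (ys n) <= (\sum_(j < p.+1) M ^+ j) / (1 - lam * (\sum_(j < p.+1) M ^+ j))) ->
  (forall n, xs n = FSigSAS R p lam l I0 (xs n.+1) (zz n)) ->
  (forall n, ys n = FSigSAS R p lam l I0 (ys n.+1) (zz n)) ->
  xs = ys.
Proof.
move=> lam0 Hz hq Hx Hy Rx Ry.
have M0 : 0 <= M by apply: le_trans (Hz 0%N).
set Mt := \sum_(j < p.+1) M ^+ j.
set L := Mt / (1 - lam * Mt).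
have Mt0 : 0 <= Mt by apply: sumr_ge0 => j _; exact: exprn_ge0.
apply: funext => n; apply: tnorm0_eq.
apply: (@geo_zero R (fun n => tnorm R p l.+1 (tsub R p l.+1 (xs n) (ys n))) (lam * Mt) (L + L)).
- exact: mulr_ge0.
- exact: hq.
- move=> k; rewrite {1}(Rx k) {1}(Ry k).
  exact: (@F_contr R p l I0 M lam (zz k) (xs k.+1) (ys k.+1) lam0 (Hz k)).
- move=> k; apply: le_trans (tsub_le _ _) _; apply: lerD; [exact: Hx | exact: Hy].
Qed.

Unset Implicit Arguments.

Theorem mainTheorem2 (R : realType) (M : R) (l p : nat) (lam : R)
  (I0 : {set 'I_p.+1}) :
  0 < M -> ord0 \in I0 -> (1 < #|I0|)%N ->
  0 < lam -> lam < 1 -> lam * (\sum_(j < p.+1) M ^+ j) < 1 ->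
  let Mt := \sum_(j < p.+1) M ^+ j in
  let L := Mt / (1 - lam * Mt) in
  let F := FSigSAS R p lam l I0 in
  (* (1) contraction *)
  ((forall (x1 x2 : tensor R p l.+1) (z : R), `|z| <= M ->
      tnorm R p l.+1 (tsub R p l.+1 (F x1 z) (F x2 z)) <= lam * Mt * tnorm R p l.+1 (tsub R p l.+1 x1 x2))
   /\ lam * Mt < 1)
  (* (2) the closed ball of radius L is invariant *)
  /\ (forall (x : tensor R p l.+1) (z : R), tnorm R p l.+1 x <= L -> `|z| <= M ->
        tnorm R p l.+1 (F x z) <= L)
  (* (3) ESP on K_M (state space: closed ball of radius L), the filter is
     U^SigSAS, it takes values in K_L, and it has the FMP *)
  /\ ESP [set x : tensor R p l.+1 | tnorm R p l.+1 x <= L] F (KM R M)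
  /\ (forall zz, KM R M zz ->
        (forall n, tnorm R p l.+1 (USigSAS R p lam l I0 zz n) <= L) /\
        (forall n, USigSAS R p lam l I0 zz n = F (USigSAS R p lam l I0 zz n.+1) (zz n)))
  /\ {within KM R M, continuous (USigSAS R p lam l I0)}.
Proof.
move=> M0 I00 _ lam0 lam1 hq Mt L F.
have Mt0 : 0 <= Mt by rewrite /Mt; apply: sumr_ge0 => j _; exact: exprn_ge0 (ltW M0).
have hqM : lam * Mt < 1 := hq.
have hq0 : 1 - lam * Mt != 0 by rewrite subr_eq0 eq_sym (lt_eqF hqM).
have part4 : forall zz, KM R M zz ->
        (forall n, tnorm R p l.+1 (USigSAS R p lam l I0 zz n) <= L) /\
        (forall n, USigSAS R p lam l I0 zz n = F (USigSAS R p lam l I0 zz n.+1) (zz n)).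
  move=> zz Kzz; split.
    exact: (@U_ball R p l I0 M lam zz I00 (ltW M0) Kzz lam0 lam1 hq).
  move=> n; exact: (@U_rec R p l I0 lam zz n I00 lam1).
split.
  split => //; move=> x1 x2 z zM.
  exact: (@F_contr R p l I0 M lam z x1 x2 (ltW lam0) zM).
split.
  move=> x z Hx zM.
  apply: le_trans (@F_bound R p l I0 M lam z x (ltW lam0) zM) _.
  have -> : L = lam * (Mt * L) + Mt by rewrite /L; field.
  rewrite lerD2r; apply: ler_wpM2l; first exact: ltW.
  apply: ler_wpM2l => //.
split.
  move=> zz Kzz; exists (USigSAS R p lam l I0 zz); split.
    have [H1 H2] := part4 zz Kzz; split; [exact: H1 | exact: H2].
  move=> ys [Hys Rys].
  have [H1 H2] := part4 zz Kzz.
  exact: (@sol_unique R p l I0 M lam zz (USigSAS R p lam l I0 zz) ys (ltW lam0) Kzz hq H1 Hys H2 Rys).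
split; first exact: part4.
apply: continuous_subspaceT; exact: cont_U.
Qed.
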